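(* Let $\mathcal{H}$ be a complex Hilbert space of finite dimension $n\ge2$ and $m\ge2$. Let $\mathcal{G}=(\{1,\dots,m\},E)$ be a connected undirected graph, and for each edge $(j,k)\in E$ let $U_{(j,k)}$ be the unitary on $\mathcal{H}^{\otimes m}$ swapping tensor factors $j$ and $k$. Let $q_0>0$ and $q_{j,k}>0$ for $(j,k)\in E$ with $q_0+\sum_{(j,k)\in E}q_{j,k}=1$, and define the map on operators of $\mathcal{H}^{\otimes m}$ $$\mathcal{E}(X)=q_0X+\sum_{(j,k)\in E}q_{j,k}\,U_{(j,k)}XU_{(j,k)}^\dagger.$$ Then the set of fixed points of $\mathcal{E}$ (operators $X$ with $\mathcal{E}(X)=X$) coincides with the set of permutation-invariant operators, i.e. those $X$ with $U_\pi X=XU_\pi$ for every permutation $\pi$ of $\{1,\dots,m\}$.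
   Context: For a permutation $\pi$ of $\{1,\dots,m\}$, $U_\pi$ denotes the unitary on $\mathcal{H}^{\otimes m}$ with $U_\pi(X_1\otimes\cdots\otimes X_m)U_\pi^\dagger=X_{\pi(1)}\otimes\cdots\otimes X_{\pi(m)}$ for all operators $X_i$ on $\mathcal{H}$; $U_{(j,k)}$ is $U_\pi$ for the transposition $\pi$ of $j$ and $k$. *)

(* Defs.v *)
From HB Require Import structures.
From mathcomp Require Import all_boot all_order all_algebra all_fingroup.
From mathcomp Require Import complex.
Set Implicit Arguments. Unset Strict Implicit. Unset Printing Implicit Defensive.
Import Order.TTheory GRing.Theory Num.Theory.
Local Open Scope ring_scope.

(* Computational basis of H^{(x) m}, H = C^n : functions b : 'I_m -> 'I_n,
   basis vector e_b = e_{b 0} (x) ... (x) e_{b (m-1)}. *)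
Definition tbasis (m n : nat) := {ffun 'I_m -> 'I_n}.
Definition tdim (m n : nat) : nat := #|{ffun 'I_m -> 'I_n}|.

(* Operators on H^{(x) m} as square matrices over R[i], rows/columns
   indexed by the enumeration of the basis. *)
Definition op (R : rcfType) (m n : nat) := 'M[R[i]]_(tdim m n).

(* U_pi e_b = e_{b o pi}; this gives
   U_pi (X_1 (x) ... (x) X_m) U_pi^dagger = X_{pi 1} (x) ... (x) X_{pi m}. *)
Definition Uperm (R : rcfType) (m n : nat) (pi : 'S_m) : op R m n :=
  \matrix_(a, b) ((enum_val a == [ffun k => (enum_val b : tbasis m n) (pi k)]) %:R).

Definition adjoint (R : rcfType) (N : nat) (A : 'M[R[i]]_N) : 'M[R[i]]_N :=
  (map_mx (@Num.conj _) A)^T.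

Definition Uswap (R : rcfType) (m n : nat) (j k : 'I_m) : op R m n :=
  Uperm R n (tperm j k).

Definition chan (R : rcfType) (m n : nat) (E : {set 'I_m * 'I_m})
    (q0 : R) (q : 'I_m * 'I_m -> R) (X : op R m n) : op R m n :=
  (q0%:C)%C *: X +
  \sum_(e in E) ((q e)%:C)%C *: (Uswap R n e.1 e.2 *m X *m adjoint (Uswap R n e.1 e.2)).

Definition adj_rel (m : nat) (E : {set 'I_m * 'I_m}) : rel 'I_m :=
  fun j k => ((j, k) \in E) || ((k, j) \in E).

(* Main.v *)
Require Import Defs.
From mathcomp Require Import all_boot all_order all_algebra all_fingroup complex.
From mathcomp Require Import ring.
Import Order.TTheory GRing.Theory Num.Theory.
Local Open Scope ring_scope.

Section P.
Variables (m n : nat).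
Definition pf (pi : 'S_m) (a : 'I_(tdim m n)) : 'I_(tdim m n) :=
  enum_rank [ffun k => (enum_val a : tbasis m n) (pi^-1%g k)].
Lemma pf_inj pi : injective (pf pi).
Proof.
move=> a b /enum_rank_inj /ffunP h; apply: enum_val_inj; apply/ffunP => k.
by have := h (pi k); rewrite !ffunE permK.
Qed.
Definition Pp pi : 'S_(tdim m n) := perm (@pf_inj pi).

Lemma UpermE (R : rcfType) pi : Uperm R n pi = perm_mx (Pp pi).
Proof.
apply/matrixP => a b; rewrite !mxE permE /pf.
congr ((nat_of_bool _) %:R); apply/idP/idP => /eqP h; apply/eqP.
  apply: enum_val_inj; rewrite enum_rankK h; apply/ffunP => k; rewrite !ffunE permKV.
  by [].
rewrite -h enum_rankK; apply/ffunP => k; rewrite !ffunE permK //.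
Qed.

Lemma PpM pi s : Pp (pi * s)%g = (Pp pi * Pp s)%g.
Proof.
apply/permP => a; rewrite permM !permE /pf enum_rankK; congr enum_rank.
by apply/ffunP => k; rewrite !ffunE invMg permM.
Qed.

Lemma Pp1 : Pp 1%g = 1%g.
Proof.
apply/permP => a; rewrite !permE /pf invg1; apply: enum_val_inj; rewrite enum_rankK.
by apply/ffunP => k; rewrite !ffunE perm1.
Qed.
End P.
Lemma key (C : numClosedFieldType) (T I : finType) (P : pred I) (p : I -> C)
  (phi : I -> T -> T) (f : T -> C) :
  (forall i, P i -> 0 < p i) -> (forall i, injective (phi i)) ->
  (forall x, \sum_(i | P i) p i * (f (phi i x) - f x) = 0) ->
  forall i, P i -> forall x, f (phi i x) = f x.
Proof.
move=> hp hinj hs.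
have hS i : \sum_x `|f (phi i x) - f x| ^+ 2 =
   \sum_x ((f x - f (phi i x)) * (f x)^* + f x * (f x - f (phi i x))^*).
  have e1 : \sum_x f (phi i x) * (f (phi i x))^* = \sum_x f x * (f x)^*.
    by rewrite [RHS](reindex_inj (hinj i)).
  transitivity (\sum_x ((f x - f (phi i x)) * (f x)^* + f x * (f x - f (phi i x))^*
       + (f (phi i x) * (f (phi i x))^* - f x * (f x)^*))).
    apply: eq_bigr => x _; rewrite normCK !rmorphB /=; ring.
  by rewrite big_split /= sumrB e1 subrr addr0.
have H : \sum_(i | P i) p i * \sum_x `|f (phi i x) - f x| ^+ 2 = 0.
  under eq_bigr do rewrite hS.
  under eq_bigr do rewrite mulr_sumr.
  rewrite exchange_big /= big1 // => x _.
  rewrite (eq_bigr (fun i => (p i * (f x - f (phi i x))) * (f x)^* +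
        f x * (p i * (f x - f (phi i x)))^*)); last first.
    move=> i Pi; rewrite rmorphM /= (conj_Creal (gtr0_real (hp i Pi))); ring.
  rewrite big_split /= -mulr_suml -mulr_sumr -rmorph_sum /=.
  have -> : \sum_(i | P i) p i * (f x - f (phi i x)) = 0.
    rewrite (eq_bigr (fun i => - (p i * (f (phi i x) - f x)))) ?sumrN ?hs ?oppr0 // => i _; ring.
  by rewrite rmorph0 mul0r mulr0 addr0.
move=> i Pi x.
have Hi : \sum_x `|f (phi i x) - f x| ^+ 2 = 0.
  have := psumr_eq0P _ H Pi.
  rewrite /=; move=> h; move: (h (fun j Pj => mulr_ge0 (ltW (hp j Pj)) (sumr_ge0 _ (fun k _ => exprn_ge0 2 (normr_ge0 _))))).
  by move/eqP; rewrite mulf_eq0 (gt_eqF (hp i Pi)) /= => /eqP.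
have := @psumr_eq0P _ _ predT (fun x => `|f (phi i x) - f x| ^+ 2)
   (fun k _ => exprn_ge0 2 (normr_ge0 _)) Hi x isT.
by move/eqP; rewrite sqrf_eq0 normr_eq0 subr_eq0 => /eqP.
Qed.

Lemma adjoint_perm (R : rcfType) N (s : 'S_N) :
  adjoint (perm_mx s : 'M[R[i]]_N) = perm_mx s^-1.
Proof.
rewrite /adjoint -tr_perm_mx; congr trmx; apply/matrixP => a b.
by rewrite !mxE conjC_nat.
Qed.

Lemma conj_permE (R : rcfType) N (s : 'S_N) (X : 'M[R[i]]_N) a c :
  (perm_mx s *m X *m perm_mx s^-1) a c = X (s a) (s c).
Proof. by rewrite -row_permE -col_permE !mxE. Qed.

Definition goodp (R : rcfType) m n (X : op R m n) (pi : 'S_m) :=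
  perm_mx (Pp m n pi) *m X = X *m perm_mx (Pp m n pi).
Arguments goodp {R m n} X pi.

Lemma goodp1 (R : rcfType) m n (X : op R m n) : goodp X 1%g.
Proof. by rewrite /goodp Pp1 perm_mx1 mul1mx mulmx1. Qed.

Lemma goodpM (R : rcfType) m n (X : op R m n) s t :
  goodp X s -> goodp X t -> goodp X (s * t)%g.
Proof.
rewrite /goodp PpM !perm_mxM => hs ht.
by rewrite -mulmxA ht mulmxA hs mulmxA.
Qed.

Lemma goodp_conj (R : rcfType) m n (X : op R m n) (s : 'S_(tdim m n)) :
  perm_mx s *m X *m perm_mx s^-1 = X -> perm_mx s *m X = X *m perm_mx s.
Proof.
move=> h; rewrite -{2}h -mulmxA -perm_mxM mulVg perm_mx1 mulmx1 //.
Qed.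

Theorem lemma1 (R : rcfType) (n m : nat) (hn : (2 <= n)%N) (hm : (2 <= m)%N)
    (E : {set 'I_m * 'I_m})
    (hE : forall e, e \in E -> (e.1 < e.2)%N)
    (hconn : forall j k : 'I_m, connect (adj_rel E) j k)
    (q0 : R) (q : 'I_m * 'I_m -> R)
    (hq0 : 0 < q0) (hq : forall e, e \in E -> 0 < q e)
    (hsum : q0 + \sum_(e in E) q e = 1) :
  forall X : op R m n,
    chan E q0 q X = X <-> (forall pi : 'S_m, Uperm R n pi *m X = X *m Uperm R n pi).
Proof.
move=> X.
have chanE : chan E q0 q X = (q0%:C)%C *: X + \sum_(e in E) ((q e)%:C)%C *:
   (perm_mx (Pp m n (tperm e.1 e.2)) *m X *m perm_mx (Pp m n (tperm e.1 e.2))^-1).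
  by rewrite /chan; under eq_bigr do rewrite /Uswap UpermE adjoint_perm.
split; last first.
  move=> hall; rewrite chanE.
  under eq_bigr => e _.
    rewrite (_ : _ *m _ *m _ = X); last first.
      by have := hall (tperm e.1 e.2); rewrite UpermE => ->;
         rewrite -mulmxA -perm_mxM mulgV perm_mx1 mulmx1.
    over.
  by rewrite -scaler_suml -scalerDl -rmorph_sum -rmorphD /= hsum rmorph1 scale1r.
move=> hfix.
have hedge : forall e, e \in E -> goodp X (tperm e.1 e.2).
  move=> e eE; rewrite /goodp; apply: goodp_conj; apply/matrixP => a c.
  rewrite conj_permE.
  pose s e := Pp m n (tperm e.1 e.2).
  have h1 : forall e', e' \in E -> 0 < (q e')%:C%C :> R[i].
    by move=> e' e'E; rewrite ltcR hq.
  have h2 : forall e', injective (fun x : 'I_(tdim m n) * 'I_(tdim m n) => (s e' x.1, s e' x.2)).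
    by move=> e' [x1 x2] [y1 y2] [/perm_inj -> /perm_inj ->].
  have h3 : forall x : 'I_(tdim m n) * 'I_(tdim m n),
      \sum_(e' in E) (q e')%:C%C * (X (s e' x.1) (s e' x.2) - X x.1 x.2) = 0.
    move=> [a' c'] /=.
    have := congr1 (fun M : 'M[R[i]]_(tdim m n) => M a' c') hfix; rewrite chanE !mxE summxE.
    rewrite (eq_bigr (fun k => (q k)%:C%C * X (s k a') (s k c'))); last first.
      by move=> k _; rewrite mxE conj_permE.
    have hq0' : q0 = 1 - \sum_(e in E) q e by rewrite -hsum addrK.
    rewrite hq0' rmorphB rmorph1 rmorph_sum /= => h.
    under eq_bigr do rewrite mulrBr.
    rewrite sumrB -mulr_suml.
    move: h; set S1 := \sum_(i in E) _ * X _ _; set S2 := \sum_(i in E) _.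
    move/(congr1 (fun y => y - (1 - S2) * X a' c')); rewrite addrC addrK => ->; ring.
  exact: (@key R[i] _ _ (mem E) (fun e => (q e)%:C%C)
     (fun e x => (s e x.1, s e x.2)) (fun x => X x.1 x.2) h1 h2 h3 e eE (a, c)).
have hadj : forall j k, adj_rel E j k -> goodp X (tperm j k).
  move=> j k /orP [h|h]; first exact: (hedge (j, k) h).
  by rewrite tpermC; exact: (hedge (k, j) h).
have htp : forall j k, goodp X (tperm j k).
  move=> j k; have /connectP [p hp ->] := hconn j k.
  suff gen : forall p x, goodp X (tperm j x) -> path (adj_rel E) x p ->
      goodp X (tperm j (last x p)).
    by apply: gen => //; rewrite tperm1; exact: goodp1.
  elim=> [|y p' IH] x hx //= /andP [hxy hp']; apply: IH hp'.
  case: (eqVneq j y) => [<-|njy]; first by rewrite tperm1; exact: goodp1.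
  case: (eqVneq j x) => [ejx|njx]; first by rewrite ejx; exact: hadj.
  have e : tperm j y = (tperm j x ^ tperm x y)%g.
    by rewrite tpermJ tpermL tpermD // eq_sym.
  by rewrite e conjgE tpermV; apply: goodpM; [exact: hadj | apply: goodpM => //; exact: hadj].
move=> pi; rewrite UpermE; have [ts -> _] := prod_tpermP pi.
elim: ts => [|t ts IH]; first by rewrite big_nil; exact: goodp1.
by rewrite big_cons; apply: goodpM.
Qed.
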